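(* Let $A$, $B$, $I$ be finite non-empty sets, $\{V_i\}_{i\in I}\subseteq\mathcal R(A)$, $\{W_i\}_{i\in I}\subseteq\mathcal R(B)$, $Z\in\mathcal R(A,B)$, let $t\in\{1,\dots,6\}$, $\phi=\phi^{(t)}$, and define $R_1=Z$, $R_{k+1}=R_k\wedge\phi(R_k)$ for $k\in\mathbb N$. Suppose the subalgebra of $\mathcal L$ generated by $\mathrm{im}(Z)\cup\bigcup_{i\in I}(\mathrm{im}(V_i)\cup\mathrm{im}(W_i))$ is finite. Then: (a) the sequence $\{R_k\}_{k\in\mathbb N}$ is descending and the set $\{R_k:k\in\mathbb N\}$ is finite, and there is a least natural number $k$ such that $R_k=R_{k+1}$; (b) for this $k$, $R_k$ is the greatest solution to the system $WL^{2\text{-}t}(A,B,I,V_i,W_i,Z)$.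
   Context: $\mathcal L=(L,\wedge,\vee,\otimes,\to,0,1)$ is a complete residuated lattice; $\mathrm{im}$ denotes the set of values of a fuzzy relation, and subalgebras are with respect to $(L,\wedge,\vee,\otimes,\to,0,1)$. For non-empty sets $X,Y$, $\mathcal R(X,Y)$ is the set of fuzzy relations $X\times Y\to L$, $\mathcal R(X)=\mathcal R(X,X)$, ordered pointwise with pointwise meets; $R^{-1}(y,x)=R(x,y)$; $(R\circ S)(x,t)=\bigvee_{y}R(x,y)\otimes S(y,t)$. Residuals: for $S\in\mathcal R(X,Y)$, $T\in\mathcal R(X)$, $T'\in\mathcal R(Y)$: $(S/T)(x,y)=\bigwedge_{x'\in X}(T(x',x)\to S(x',y))$, $(S\backslash T')(x,y)=\bigwedge_{y'\in Y}(T'(y,y')\to S(x,y'))$. The maps $\phi^{(t)}:\mathcal R(A,B)\to\mathcal R(A,B)$ are: $\phi^{(1)}(R)=\bigwedge_{i}[(W_i\circ R^{-1})\backslash V_i]^{-1}$; $\phi^{(2)}(R)=\bigwedge_{i}(R\circ W_i)/V_i$; $\phi^{(3)}(R)=\bigwedge_{i}[(W_i\circ R^{-1})\backslash V_i]^{-1}\wedge[(V_i\circ R)\backslash W_i]$; $\phi^{(4)}(R)=\bigwedge_{i}[(R\circ W_i)/V_i]\wedge[(R^{-1}\circ V_i)/W_i]^{-1}$; $\phi^{(5)}(R)=\bigwedge_{i}[(R\circ W_i)/V_i]\wedge[(V_i\circ R)\backslash W_i]$; $\phi^{(6)}(R)=\bigwedge_{i}[(W_i\circ R^{-1})\backslash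 V_i]^{-1}\wedge[(R^{-1}\circ V_i)/W_i]^{-1}$. Heterogeneous systems with unknown $U\in\mathcal R(A,B)$: $WL^{2\text{-}1}$: $U^{-1}\circ V_i\le W_i\circ U^{-1}$ ($i\in I$), $U\le Z$; $WL^{2\text{-}2}$: $V_i\circ U\le U\circ W_i$ ($i\in I$), $U\le Z$; $WL^{2\text{-}3}$: $U^{-1}\circ V_i\le W_i\circ U^{-1}$ and $U\circ W_i\le V_i\circ U$ ($i\in I$), $U\le Z$; $WL^{2\text{-}4}$: $V_i\circ U\le U\circ W_i$ and $W_i\circ U^{-1}\le U^{-1}\circ V_i$ ($i\in I$), $U\le Z$; $WL^{2\text{-}5}$: $V_i\circ U=U\circ W_i$ ($i\in I$), $U\le Z$; $WL^{2\text{-}6}$: $U^{-1}\circ V_i=W_i\circ U^{-1}$ ($i\in I$), $U\le Z$. *)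

(* Defs.v *)
From Stdlib Require List.
From mathcomp Require Import all_boot.
Set Implicit Arguments. Unset Strict Implicit. Unset Printing Implicit Defensive.

Record CRL := {
  car :> Type;
  le : car -> car -> Prop;
  sup : (car -> Prop) -> car;
  inf : (car -> Prop) -> car;
  mul : car -> car -> car;
  imp : car -> car -> car;
  zero : car;
  one : car;
  crl_le_refl : forall x, le x x;
  crl_le_antisym : forall x y, le x y -> le y x -> x = y;
  crl_le_trans : forall x y z, le x y -> le y z -> le x z;
  crl_sup_ub : forall (S : car -> Prop) x, S x -> le x (sup S);
  crl_sup_least : forall (S : car -> Prop) y, (forall x, S x -> le x y) -> le (sup S) y;
  crl_inf_lb : forall (S : car -> Prop) x, S x -> le (inf S) x;
  crl_inf_greatest : forall (S : car -> Prop) y, (forall x, S x -> le y x) -> le y (inf S);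
  crl_zero_least : forall x, le zero x;
  crl_one_greatest : forall x, le x one;
  crl_mulA : forall x y z, mul x (mul y z) = mul (mul x y) z;
  crl_mulC : forall x y, mul x y = mul y x;
  crl_mul1 : forall x, mul one x = x;
  crl_adj : forall x y z, le (mul x y) z <-> le x (imp y z)
}.

Arguments le {c}. Arguments sup {c}. Arguments inf {c}. Arguments mul {c}.
Arguments imp {c}. Arguments zero {c}. Arguments one {c}.

Section FuzzyRel.
Variable L : CRL.

Definition meet (x y : L) : L := inf (fun z => z = x \/ z = y).
Definition join (x y : L) : L := sup (fun z => z = x \/ z = y).

Definition fzrel (X Y : Type) := X -> Y -> L.

Definition rle {X Y : Type} (R S : fzrel X Y) := forall x y, le (R x y) (S x y).

Definition conv {X Y : Type} (R : fzrel X Y) : fzrel Y X := fun y x => R x y.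

Definition comp {X Y T : Type} (R : fzrel X Y) (S : fzrel Y T) : fzrel X T :=
  fun x t => sup (fun z => exists y, z = mul (R x y) (S y t)).

Definition rres {X Y : Type} (S : fzrel X Y) (T : fzrel X X) : fzrel X Y :=
  fun x y => inf (fun z => exists x', z = imp (T x' x) (S x' y)).

Definition lres {X Y : Type} (S : fzrel X Y) (T' : fzrel Y Y) : fzrel X Y :=
  fun x y => inf (fun z => exists y', z = imp (T' y y') (S x y')).

Definition rmeet {X Y : Type} (R S : fzrel X Y) : fzrel X Y :=
  fun x y => meet (R x y) (S x y).

Definition bigmeet {I X Y : Type} (F : I -> fzrel X Y) : fzrel X Y :=
  fun x y => inf (fun z => exists i, z = F i x y).

Definition phi {I A B : Type} (t : nat) (V : I -> fzrel A A) (W : I -> fzrel B B)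
  (R : fzrel A B) : fzrel A B :=
  match t with
  | 1 => bigmeet (fun i => conv (lres (comp (W i) (conv R)) (V i)))
  | 2 => bigmeet (fun i => rres (comp R (W i)) (V i))
  | 3 => bigmeet (fun i => rmeet (conv (lres (comp (W i) (conv R)) (V i)))
                                 (lres (comp (V i) R) (W i)))
  | 4 => bigmeet (fun i => rmeet (rres (comp R (W i)) (V i))
                                 (conv (rres (comp (conv R) (V i)) (W i))))
  | 5 => bigmeet (fun i => rmeet (rres (comp R (W i)) (V i))
                                 (lres (comp (V i) R) (W i)))
  | _ => bigmeet (fun i => rmeet (conv (lres (comp (W i) (conv R)) (V i)))
                                 (conv (rres (comp (conv R) (V i)) (W i))))
  end.

Definition WL {I A B : Type} (t : nat) (V : I -> fzrel A A) (W : I -> fzrel B B)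
  (Z : fzrel A B) (U : fzrel A B) : Prop :=
  rle U Z /\
  match t with
  | 1 => forall i, rle (comp (conv U) (V i)) (comp (W i) (conv U))
  | 2 => forall i, rle (comp (V i) U) (comp U (W i))
  | 3 => forall i, rle (comp (conv U) (V i)) (comp (W i) (conv U)) /\
                   rle (comp U (W i)) (comp (V i) U)
  | 4 => forall i, rle (comp (V i) U) (comp U (W i)) /\
                   rle (comp (W i) (conv U)) (comp (conv U) (V i))
  | 5 => forall i, comp (V i) U = comp U (W i)
  | _ => forall i, comp (conv U) (V i) = comp (W i) (conv U)
  end.

Definition greatest_solution {X Y : Type} (P : fzrel X Y -> Prop) (U : fzrel X Y) :=
  P U /\ forall U', P U' -> rle U' U.

(* Rseq f Z n = R_{n+1}, where R_1 = Z and R_{k+1} = R_k /\ f(R_k) *)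
Fixpoint Rseq {X Y : Type} (f : fzrel X Y -> fzrel X Y) (Z : fzrel X Y) (n : nat) : fzrel X Y :=
  match n with
  | 0 => Z
  | n'.+1 => rmeet (Rseq f Z n') (f (Rseq f Z n'))
  end.

Definition subalg_closed (P : L -> Prop) : Prop :=
  P zero /\ P one /\
  forall x y, P x -> P y ->
    P (meet x y) /\ P (join x y) /\ P (mul x y) /\ P (imp x y).

Definition gen_subalg (S : L -> Prop) : L -> Prop :=
  fun x => forall P : L -> Prop, (forall y, S y -> P y) -> subalg_closed P -> P x.

Definition finite_set {T : Type} (P : T -> Prop) : Prop :=
  exists s : seq T, forall x, P x -> List.In x s.

Definition generators {I A B : Type} (Z : fzrel A B) (V : I -> fzrel A A)
  (W : I -> fzrel B B) : L -> Prop :=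
  fun x => (exists a b, x = Z a b) \/ (exists i a a', x = V i a a')
           \/ (exists i b b', x = W i b b').

End FuzzyRel.

(* Main.v *)
From Stdlib Require Import FunctionalExtensionality PropExtensionality ClassicalEpsilon.
Require Import Defs.
From mathcomp Require Import all_boot.

Set Implicit Arguments. Unset Strict Implicit. Unset Printing Implicit Defensive.

Definition dec (Q : Prop) : bool := if excluded_middle_informative Q then true else false.
Lemma decP Q : dec Q = true <-> Q.
Proof. rewrite /dec; case: excluded_middle_informative => h; split => //. Qed.

Lemma In_of_mem (T : eqType) (x : T) (s : seq T) : x \in s -> List.In x s.
Proof.
elim: s => [|y s IH] //=; rewrite in_cons => /orP [/eqP ->|h]; [by left | right; exact: IH].
Qed.

Fixpoint pref (X : Type) (f : nat -> X) (n : nat) : seq X :=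
  match n with 0 => [:: f 0] | n'.+1 => f n :: pref f n' end.
Lemma In_pref X (f : nat -> X) n m : m <= n -> List.In (f m) (pref f n).
Proof.
elim: n => [|n IH] /=; first by rewrite leqn0 => /eqP ->; left.
rewrite leq_eqVlt => /orP [/eqP ->|h]; [by left | right; exact: IH].
Qed.

Section Lat.
Variable L : CRL.

Lemma leR (x : L) : le x x. Proof. exact: crl_le_refl. Qed.
Lemma leT (x y z : L) : le x y -> le y z -> le x z. Proof. exact: crl_le_trans. Qed.
Lemma leA (x y : L) : le x y -> le y x -> x = y. Proof. exact: crl_le_antisym. Qed.

Lemma meetP (x y z : L) : le z (meet x y) <-> le z x /\ le z y.
Proof.
split.
- move=> h; split; apply: leT h _; apply: crl_inf_lb; by [left|right].
- case=> h1 h2; apply: crl_inf_greatest => w [->|->] //.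
Qed.
Lemma joinP (x y z : L) : le (join x y) z <-> le x z /\ le y z.
Proof.
split.
- move=> h; split; apply: leT h; apply: crl_sup_ub; by [left|right].
- case=> h1 h2; apply: crl_sup_least => w [->|->] //.
Qed.

Lemma mul_monol (x x' y : L) : le x x' -> le (Defs.mul x y) (Defs.mul x' y).
Proof. move=> h; apply/crl_adj; apply: leT h _; apply/crl_adj; exact: leR. Qed.
Lemma mul_monor (x y y' : L) : le y y' -> le (Defs.mul x y) (Defs.mul x y').
Proof. move=> h; rewrite (crl_mulC x y) (crl_mulC x y'); exact: mul_monol. Qed.

Section Fin.
Variable P : L -> Prop.
Hypothesis hP : subalg_closed P.

Lemma inf_list (T : Type) (f : T -> L) (l : seq T) :
  (forall y, P (f y)) -> P (inf (fun z => exists y, List.In y l /\ z = f y)).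
Proof.
case: hP => h0 [h1 hc] hf.
elim: l => [|x l IH].
- have -> : inf (fun z => exists y, List.In y [::] /\ z = f y) = Defs.one.
    apply: leA; first exact: crl_one_greatest.
    by apply: crl_inf_greatest => w [y [[] _]].
  exact: h1.
- set M := inf (fun z => exists y, List.In y l /\ z = f y).
  have -> : inf (fun z => exists y, List.In y (x :: l) /\ z = f y) = meet (f x) M.
    apply: leA.
    + apply/meetP; split.
      * apply: crl_inf_lb; exists x; split=> //; by left.
      * apply: crl_inf_greatest => w [y [hy ->]]; apply: crl_inf_lb; exists y; split=> //; by right.
    + move: (leR (meet (f x) M)) => /meetP [m1 m2].
      apply: crl_inf_greatest => w [y [[<-|hy] ->]] //.
      apply: leT m2 _; apply: crl_inf_lb; by exists y.
  by case: (hc _ _ (hf x) IH).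
Qed.

Lemma sup_list (T : Type) (f : T -> L) (l : seq T) :
  (forall y, P (f y)) -> P (sup (fun z => exists y, List.In y l /\ z = f y)).
Proof.
case: hP => h0 [h1 hc] hf.
elim: l => [|x l IH].
- have -> : sup (fun z => exists y, List.In y [::] /\ z = f y) = Defs.zero.
    apply: leA; last exact: crl_zero_least.
    by apply: crl_sup_least => w [y [[] _]].
  exact: h0.
- set M := sup (fun z => exists y, List.In y l /\ z = f y).
  have -> : sup (fun z => exists y, List.In y (x :: l) /\ z = f y) = join (f x) M.
    apply: leA.
    + move: (leR (join (f x) M)) => /joinP [m1 m2].
      apply: crl_sup_least => w [y [[<-|hy] ->]] //.
      apply: leT m2; apply: crl_sup_ub; by exists y.
    + apply/joinP; split.
      * apply: crl_sup_ub; exists x; split=> //; by left.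
      * apply: crl_sup_least => w [y [hy ->]]; apply: crl_sup_ub; exists y; split=> //; by right.
  by case: (hc _ _ (hf x) IH) => _ [].
Qed.

Lemma fin_ex (T : finType) (f : T -> L) :
  (fun z => exists y, z = f y) = (fun z => exists y, List.In y (enum T) /\ z = f y).
Proof.
apply: functional_extensionality => z; apply: propositional_extensionality; split.
- case=> y ->; exists y; split=> //; apply: In_of_mem; by rewrite mem_enum.
- by case=> y [_ ->]; exists y.
Qed.

Lemma inf_fin (T : finType) (f : T -> L) :
  (forall y, P (f y)) -> P (inf (fun z => exists y, z = f y)).
Proof. rewrite fin_ex; exact: inf_list. Qed.
Lemma sup_fin (T : finType) (f : T -> L) :
  (forall y, P (f y)) -> P (sup (fun z => exists y, z = f y)).
Proof. rewrite fin_ex; exact: sup_list. Qed.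

Definition allP (X Y : Type) (R : fzrel L X Y) := forall x y, P (R x y).

Lemma allP_comp (X Y T : finType) (R : fzrel L X Y) (S : fzrel L Y T) :
  allP R -> allP S -> allP (Defs.comp R S).
Proof.
move=> hR hS x t; apply: sup_fin => y.
by case: hP => _ [_ hc]; case: (hc _ _ (hR x y) (hS y t)) => _ [_ []].
Qed.
Lemma allP_rres (X Y : finType) (S : fzrel L X Y) (T : fzrel L X X) :
  allP S -> allP T -> allP (rres S T).
Proof.
move=> hS hT x y; apply: inf_fin => x'.
by case: hP => _ [_ hc]; case: (hc _ _ (hT x' x) (hS x' y)) => _ [_ []].
Qed.
Lemma allP_lres (X Y : finType) (S : fzrel L X Y) (T : fzrel L Y Y) :
  allP S -> allP T -> allP (lres S T).
Proof.
move=> hS hT x y; apply: inf_fin => y'.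
by case: hP => _ [_ hc]; case: (hc _ _ (hT y y') (hS x y')) => _ [_ []].
Qed.
Lemma allP_conv (X Y : Type) (R : fzrel L X Y) : allP R -> allP (conv R).
Proof. by move=> h x y; apply: h. Qed.
Lemma allP_rmeet (X Y : Type) (R S : fzrel L X Y) : allP R -> allP S -> allP (rmeet R S).
Proof. by move=> h1 h2 x y; case: hP => _ [_ hc]; case: (hc _ _ (h1 x y) (h2 x y)). Qed.
Lemma allP_bigmeet (I X Y : finType) (F : I -> fzrel L X Y) :
  (forall i, allP (F i)) -> allP (bigmeet F).
Proof. move=> h x y; apply: inf_fin => i; exact: h. Qed.

Lemma allP_phi (I A B : finType) t (V : I -> fzrel L A A) (W : I -> fzrel L B B) R :
  (forall i, allP (V i)) -> (forall i, allP (W i)) -> allP R -> allP (phi t V W R).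
Proof.
move=> hV hW hR.
have t1 i := allP_conv (allP_lres (allP_comp (hW i) (allP_conv hR)) (hV i)).
have t2 i := allP_rres (allP_comp hR (hW i)) (hV i).
have t3 i := allP_lres (allP_comp (hV i) hR) (hW i).
have t4 i := allP_conv (allP_rres (allP_comp (allP_conv hR) (hV i)) (hW i)).
case: t => [|[|[|[|[|[|t]]]]]] /=; apply: allP_bigmeet => i;
 first [exact: t1 | exact: t2 | exact: allP_rmeet (t1 i) (t3 i) | exact: allP_rmeet (t2 i) (t4 i)
       | exact: allP_rmeet (t2 i) (t3 i) | exact: allP_rmeet (t1 i) (t4 i)].
Qed.
End Fin.

Lemma gen_closed (S : L -> Prop) : subalg_closed (gen_subalg S).
Proof.
split; first by move=> Q _ [].
split; first by move=> Q _ [_ []].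
move=> x y hx hy; split; [|split; [|split]] => Q hS hQ;
  have := hQ => -[_ [_ hc]]; case: (hc _ _ (hx Q hS hQ) (hy Q hS hQ)) => [? [? [? ?]]] //.
Qed.

Section Rel.
Implicit Types X Y T : Type.

Lemma rleR X Y (R : fzrel L X Y) : rle R R. Proof. move=> x y; exact: leR. Qed.
Lemma rleT X Y (R S U : fzrel L X Y) : rle R S -> rle S U -> rle R U.
Proof. move=> h1 h2 x y; exact: leT (h1 x y) (h2 x y). Qed.
Lemma rleA X Y (R S : fzrel L X Y) : rle R S -> rle S R -> R = S.
Proof.
move=> h1 h2; apply: functional_extensionality => x; apply: functional_extensionality => y.
exact: leA.
Qed.

Lemma comp_le X Y T (R : fzrel L X Y) (S : fzrel L Y T) x t c :
  le (Defs.comp R S x t) c <-> forall y, le (Defs.mul (R x y) (S y t)) c.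
Proof.
split.
- move=> h y; apply: leT h; apply: crl_sup_ub; by exists y.
- move=> h; apply: crl_sup_least => w [y ->]; exact: h.
Qed.
Lemma ge_comp X Y T (R : fzrel L X Y) (S : fzrel L Y T) x y t :
  le (Defs.mul (R x y) (S y t)) (Defs.comp R S x t).
Proof. apply: crl_sup_ub; by exists y. Qed.

Lemma rle_rres X Y (U S : fzrel L X Y) (T : fzrel L X X) :
  rle U (rres S T) <-> rle (Defs.comp T U) S.
Proof.
split.
- move=> h x' y; apply/comp_le => x.
  rewrite crl_mulC; apply/crl_adj; apply: leT (h x y) _.
  apply: crl_inf_lb; by exists x'.
- move=> h x y; apply: crl_inf_greatest => w [x' ->]; apply/crl_adj.
  rewrite crl_mulC; apply: leT (h x' y); exact: ge_comp.
Qed.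
Lemma rle_lres X Y (U S : fzrel L X Y) (T : fzrel L Y Y) :
  rle U (lres S T) <-> rle (Defs.comp U T) S.
Proof.
split.
- move=> h x y'; apply/comp_le => y.
  apply/crl_adj; apply: leT (h x y) _.
  apply: crl_inf_lb; by exists y'.
- move=> h x y; apply: crl_inf_greatest => w [y' ->]; apply/crl_adj.
  apply: leT (h x y'); exact: ge_comp.
Qed.
Lemma rle_conv X Y (U : fzrel L X Y) (M : fzrel L Y X) : rle U (conv M) <-> rle (conv U) M.
Proof. by split => h x y; apply: h. Qed.
Lemma rle_rmeet X Y (U R S : fzrel L X Y) : rle U (rmeet R S) <-> rle U R /\ rle U S.
Proof.
split.
- by move=> h; split => x y; move: (h x y) => /meetP [].
- by case=> h1 h2 x y; apply/meetP.
Qed.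
Lemma rle_bigmeet (I X Y : Type) (U : fzrel L X Y) (F : I -> fzrel L X Y) :
  rle U (bigmeet F) <-> forall i, rle U (F i).
Proof.
split.
- move=> h i x y; apply: leT (h x y) _; apply: crl_inf_lb; by exists i.
- move=> h x y; apply: crl_inf_greatest => w [i ->]; exact: h.
Qed.

Lemma comp_monol X Y T (R R' : fzrel L X Y) (S : fzrel L Y T) :
  rle R R' -> rle (Defs.comp R S) (Defs.comp R' S).
Proof.
move=> h x t; apply/comp_le => y; apply: leT (ge_comp R' S x y t); exact: mul_monol.
Qed.
Lemma comp_monor X Y T (R : fzrel L X Y) (S S' : fzrel L Y T) :
  rle S S' -> rle (Defs.comp R S) (Defs.comp R S').
Proof.
move=> h x t; apply/comp_le => y; apply: leT (ge_comp R S' x y t); exact: mul_monor.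
Qed.
Lemma conv_mono X Y (R R' : fzrel L X Y) : rle R R' -> rle (conv R) (conv R').
Proof. by move=> h x y; apply: h. Qed.
Lemma rres_mono X Y (S S' : fzrel L X Y) (T : fzrel L X X) :
  rle S S' -> rle (rres S T) (rres S' T).
Proof. move=> h; apply/rle_rres; apply: rleT h; apply/rle_rres; exact: rleR. Qed.
Lemma lres_mono X Y (S S' : fzrel L X Y) (T : fzrel L Y Y) :
  rle S S' -> rle (lres S T) (lres S' T).
Proof. move=> h; apply/rle_lres; apply: rleT h; apply/rle_lres; exact: rleR. Qed.
Lemma rmeet_mono X Y (R R' S S' : fzrel L X Y) :
  rle R R' -> rle S S' -> rle (rmeet R S) (rmeet R' S').
Proof.
move=> h1 h2; have /rle_rmeet [m1 m2] := rleR (rmeet R S).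
apply/rle_rmeet; split; [exact: rleT m1 h1 | exact: rleT m2 h2].
Qed.
Lemma bigmeet_mono (I X Y : Type) (F F' : I -> fzrel L X Y) :
  (forall i, rle (F i) (F' i)) -> rle (bigmeet F) (bigmeet F').
Proof.
move=> h; have /rle_bigmeet m := rleR (bigmeet F).
apply/rle_bigmeet => i; exact: rleT (m i) (h i).
Qed.
End Rel.

Lemma phi_mono (I A B : Type) t (V : I -> fzrel L A A) (W : I -> fzrel L B B) R R' :
  rle R R' -> rle (phi t V W R) (phi t V W R').
Proof.
move=> h.
have t1 i := conv_mono (lres_mono (V i) (comp_monor (W i) (conv_mono h))).
have t2 i := rres_mono (V i) (comp_monol (W i) h).
have t3 i := lres_mono (W i) (comp_monor (V i) h).
have t4 i := conv_mono (rres_mono (W i) (comp_monol (V i) (conv_mono h))).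
case: t => [|[|[|[|[|[|t]]]]]] /=; apply: bigmeet_mono => i;
 first [exact: t1 | exact: t2 | exact: rmeet_mono (t1 i) (t3 i) | exact: rmeet_mono (t2 i) (t4 i)
       | exact: rmeet_mono (t2 i) (t3 i) | exact: rmeet_mono (t1 i) (t4 i)].
Qed.

Lemma WL_iff (I A B : Type) t (V : I -> fzrel L A A) (W : I -> fzrel L B B) Z U :
  WL t V W Z U <-> rle U Z /\ rle U (phi t V W U).
Proof.
have e1 i : rle U (conv (lres (Defs.comp (W i) (conv U)) (V i))) <->
            rle (Defs.comp (conv U) (V i)) (Defs.comp (W i) (conv U)).
  exact: iff_trans (rle_conv _ _) (rle_lres _ _ _).
have e2 i : rle U (rres (Defs.comp U (W i)) (V i)) <-> rle (Defs.comp (V i) U) (Defs.comp U (W i)).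
  exact: rle_rres.
have e3 i : rle U (lres (Defs.comp (V i) U) (W i)) <-> rle (Defs.comp U (W i)) (Defs.comp (V i) U).
  exact: rle_lres.
have e4 i : rle U (conv (rres (Defs.comp (conv U) (V i)) (W i))) <->
            rle (Defs.comp (W i) (conv U)) (Defs.comp (conv U) (V i)).
  exact: iff_trans (rle_conv _ _) (rle_rres _ _ _).
have eq2 (X Y : Type) (P Q : fzrel L X Y) : P = Q <-> rle P Q /\ rle Q P.
  split; [by move=> ->; split; apply: rleR | by case; apply: rleA].
rewrite /WL; split; case=> hZ h; split=> //.
- case: t h => [|[|[|[|[|[|t]]]]]] /= h; apply/rle_bigmeet => i;
  try (apply/rle_rmeet; split); first [apply/e1 | apply/e2 | apply/e3 | apply/e4];
  first [exact: h i | exact: (h i).1 | exact: (h i).2 | exact: (proj1 (eq2 _ _ _ _) (h i)).1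
        | exact: (proj1 (eq2 _ _ _ _) (h i)).2].
- case: t h => [|[|[|[|[|[|t]]]]]] /= /rle_bigmeet h i; move: (h i).
  + by move=> /rle_rmeet [/e1 ? /e4 ?]; apply/eq2.
  + by move=> /e1.
  + by move=> /e2.
  + by move=> /rle_rmeet [/e1 ? /e3 ?].
  + by move=> /rle_rmeet [/e2 ? /e4 ?].
  + by move=> /rle_rmeet [/e2 ? /e3 ?]; apply/eq2.
  + by move=> /rle_rmeet [/e1 ? /e4 ?]; apply/eq2.
Qed.

Lemma stab (A B : finType) (R : nat -> fzrel L A B) (s : seq L) :
  (forall n a b, List.In (R n a b) s) -> (forall n, rle (R n.+1) (R n)) ->
  exists n, R n = R n.+1.
Proof.
move=> hin hdec.
case: (classic (exists n, R n = R n.+1)) => // hno.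
pose S n := [set p : A * B * 'I_(length s) |
               dec (le (List.nth (val p.2) s zero) (R n p.1.1 p.1.2))].
have sub n : S n.+1 \proper S n.
  apply/properP; split.
  - apply/subsetP => p; rewrite !inE => /decP h; apply/decP; exact: leT h (hdec _ _ _).
  - have [a [b hab]] : exists a b, R n a b <> R n.+1 a b.
      apply: NNPP => hh; apply: hno; exists n.
      apply: functional_extensionality => a; apply: functional_extensionality => b.
      apply: NNPP => hne; apply: hh; by exists a, b.
    have [j [hj hnth]] := List.In_nth s (R n a b) zero (hin n a b).
    exists (a, b, Ordinal (introT ltP hj)); rewrite !inE /=.
    + apply/decP; rewrite hnth; exact: leR.
    + apply/negP => /decP; rewrite hnth => h; apply: hab; exact: leA h (hdec n a b).
have cnt n : #|S n| + n <= #|S 0|.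
  elim: n => [|n IH]; first by rewrite addn0.
  rewrite addnS; apply: leq_trans IH; by rewrite ltn_add2r proper_card.
by have := cnt (#|S 0|).+1; rewrite addnS ltnNge leq_addl.
Qed.

End Lat.

Theorem theorem5p3 (L : CRL) (A B I : finType)
  (hA : inhabited A) (hB : inhabited B) (hI : inhabited I)
  (V : I -> fzrel L A A) (W : I -> fzrel L B B) (Z : fzrel L A B)
  (t : nat) (ht : (1 <= t <= 6)%N)
  (hfin : finite_set (gen_subalg (generators Z V W))) :
  let R := Rseq (phi t V W) Z in
  (forall n, rle (R n.+1) (R n)) /\
  finite_set (fun X => exists n, X = R n) /\
  exists k, R k = R k.+1 /\ (forall j, R j = R j.+1 -> (k <= j)%N) /\
            greatest_solution (WL t V W Z) (R k).
Proof.
move=> R.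
have hRS n : R n.+1 = rmeet (R n) (phi t V W (R n)) by [].
have hdesc n : rle (R n.+1) (R n).
  rewrite hRS; have /rle_rmeet [] := rleR (rmeet (R n) (phi t V W (R n))) => //.
set G := gen_subalg (generators Z V W).
have hG : subalg_closed G := gen_closed _.
have hvals n : allP G (R n).
  elim: n => [|n IH].
  - move=> a b Q hS _; apply: hS; left; by exists a, b.
  - rewrite hRS; apply: allP_rmeet => //; apply: allP_phi => // i x y Q hS _; apply: hS.
    + right; left; by exists i, x, y.
    + right; right; by exists i, x, y.
have [s hs] := hfin.
have hin n a b : List.In (R n a b) s := hs _ (hvals n a b).
have [k0 hk0] := stab hin hdesc.
have hstay m : R (k0 + m) = R k0.
  elim: m => [|m IH]; first by rewrite addn0.
  by rewrite addnS hRS IH -hRS.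
split => //; split.
- exists (pref R k0) => X [n ->].
  case: (leqP n k0) => h; first exact: In_pref.
  rewrite -(subnKC (ltnW h)) hstay; exact: In_pref.
- pose P := fun k => dec (R k = R k.+1).
  have exP : exists k, P k by exists k0; apply/decP.
  case: (ex_minnP exP) => k /decP hk hmin.
  exists k; split=> //; split.
  + move=> j hj; apply: hmin; by apply/decP.
  + split.
    * apply/WL_iff; split.
      -- elim: k {hk hmin} => [|n IH]; first exact: rleR.
         exact: rleT (hdesc n) IH.
      -- rewrite {1}hk hRS; have /rle_rmeet [] := rleR (rmeet (R k) (phi t V W (R k))) => //.
    * move=> U /WL_iff [hZ hU]; elim: (k) => [|n IH] //.
      rewrite hRS; apply/rle_rmeet; split=> //.
      apply: rleT hU _; exact: phi_mono.
Qed.
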